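(* Let $q\geq4$ be an integer, $n=q^2-1$, and let $A_0=I,A_1,A_2,A_3$ be the adjacency matrices of a symmetric 3-class association scheme on $n$ points with first eigenmatrix \[ P=\begin{bmatrix}1&\frac{q^2}{2}-q&\frac{q^2}{2}&q-2\\ 1&\frac q2&-\frac q2&-1\\ 1&-\frac q2+1&-\frac q2&q-2\\ 1&-\frac q2&\frac q2&-1\end{bmatrix}. \] Let $w_1,w_2,w_3$ be nonzero complex numbers satisfying one of the conditions (i)--(vi) below, so that $W=A_0+w_1A_1+w_2A_2+w_3A_3$ is a type-II matrix. Then $W$ is a complex Hadamard matrix if and only if $(w_1,w_2,w_3)$ satisfies (iii), (iv) or (v), or satisfies (vi) with $r=\sqrt{(17q-1)(q-1)}>0$. The conditions are: (i) $w_1=w_2=w_3$ and $w_3+\frac1{w_3}+q^2-3=0$; (ii) $w_3+\frac1{w_3}+q^2-3=0$ and $w_1=w_2=\frac{-(q-3)w_3+(q-1)}{q^2-2q-1}$; (iii) $w_1+\frac1{w_1}=\frac{2(q^2-6)}{q^2-4}$, $w_2=-1$, $w_3=w_1$; (iv) $w_1=w_3=1$ and $w_2+\frac1{w_2}=\frac{-2(q^2-2)}{q^2}$; (v) $w_1+\frac1{w_1}=-\frac2q$, $w_2=\frac1{w_1}$, $w_3=1$; (vi) for a real number $r$ with $r^2=(17q-1)(q-1)$, with $a_{0,1}=\frac{-(q-1)(q-2)+(q+2)r}{2q(q+1)}$, $a_{0,2}=\frac{(q+2)(q-1)-(q-2)r}{2q(q-3)}$, $a_{0,3}=\frac{5q^2-2q-19-(q-1)r}{2(q+1)(q-3)}$,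 $a_{1,2}=\frac{2(-q^4+2q^3+4q^2-10q+1+(q-1)r)}{q^2(q+1)(q-3)}$, $a_{1,3}=-a_{0,2}$: $w_1+\frac1{w_1}=a_{0,1}$ and $w_i=\frac{w_1^2-1}{a_{1,i}w_1-a_{0,i}}$ for $i=2,3$.
   Context: A symmetric association scheme with adjacency matrices $A_0=I,A_1,\dots,A_d$: symmetric $(0,1)$-matrices summing to $J$ whose span is closed under multiplication; with primitive idempotents $E_0=\frac1nJ,\dots,E_d$ the first eigenmatrix is defined by $A_j=\sum_iP_{i,j}E_i$. A type-II matrix is an $n\times n$ matrix $W$ with nonzero complex entries such that $W(W^{(-)})^\top=nI$ ($W^{(-)}$ the entrywise inverse). A complex Hadamard matrix is an $n\times n$ complex matrix $H$ whose entries have absolute value $1$ and $HH^*=nI$. *)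

(* Defs.v *)
From HB Require Import structures.
From mathcomp Require Import all_boot all_order all_algebra.
Set Implicit Arguments. Unset Strict Implicit. Unset Printing Implicit Defensive.
Import Order.TTheory GRing.Theory Num.Theory.
Local Open Scope ring_scope.

Definition sym_assoc_scheme (F : fieldType) (n d : nat)
    (A : 'I_d.+1 -> 'M[F]_n) : Prop :=
  [/\ A ord0 = 1%:M,
      forall i, (A i)^T = A i,
      forall i x y, A i x y = 0 \/ A i x y = 1,
      \sum_i A i = const_mx 1
    & forall i j, exists c : 'I_d.+1 -> F, A i *m A j = \sum_k c k *: A k].

Definition first_eigenmatrix (F : fieldType) (n d : nat)
    (A : 'I_d.+1 -> 'M[F]_n) (P : 'M[F]_d.+1) : Prop :=
  exists E : 'I_d.+1 -> 'M[F]_n,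
    [/\ E ord0 = n%:R^-1 *: const_mx 1,
        forall i, E i != 0,
        forall i j, E i *m E j = if i == j then E i else 0,
        \sum_i E i = 1%:M
      & (forall i, exists c : 'I_d.+1 -> F, E i = \sum_k c k *: A k) /\
        (forall j, A j = \sum_i P i j *: E i)].

Definition complex_hadamard (C : numClosedFieldType) (n : nat)
    (H : 'M[C]_n) : Prop :=
  (forall i j, `|H i j| = 1) /\
  H *m (\matrix_(i, j) (H j i)^*) = n%:R%:M.

Definition Pq (C : numClosedFieldType) (q : nat) : 'M[C]_4 :=
  let Q : C := q%:R in
  \matrix_(i < 4, j < 4)
   match nat_of_ord i, nat_of_ord j with
   | 0, 0 => 1 | 0, 1 => Q ^+ 2 / 2 - Q | 0, 2 => Q ^+ 2 / 2 | 0, _ => Q - 2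
   | 1, 0 => 1 | 1, 1 => Q / 2 | 1, 2 => - (Q / 2) | 1, _ => -1
   | 2, 0 => 1 | 2, 1 => - (Q / 2) + 1 | 2, 2 => - (Q / 2) | 2, _ => Q - 2
   | _, 0 => 1 | _, 1 => - (Q / 2) | _, 2 => Q / 2 | _, _ => -1
   end.

Section Conds.
Variables (C : numClosedFieldType) (q : nat).
Let Q : C := q%:R.

Definition cond_i (w1 w2 w3 : C) : Prop :=
  w1 = w2 /\ w2 = w3 /\ w3 + w3^-1 + Q ^+ 2 - 3 = 0.
Definition cond_ii (w1 w2 w3 : C) : Prop :=
  w3 + w3^-1 + Q ^+ 2 - 3 = 0 /\
  w1 = (- (Q - 3) * w3 + (Q - 1)) / (Q ^+ 2 - 2 * Q - 1) /\ w2 = w1.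
Definition cond_iii (w1 w2 w3 : C) : Prop :=
  w1 + w1^-1 = 2 * (Q ^+ 2 - 6) / (Q ^+ 2 - 4) /\ w2 = -1 /\ w3 = w1.
Definition cond_iv (w1 w2 w3 : C) : Prop :=
  w1 = 1 /\ w3 = 1 /\ w2 + w2^-1 = - (2 * (Q ^+ 2 - 2)) / Q ^+ 2.
Definition cond_v (w1 w2 w3 : C) : Prop :=
  w1 + w1^-1 = - (2 / Q) /\ w2 = w1^-1 /\ w3 = 1.

Definition a01 (r : C) := (- ((Q - 1) * (Q - 2)) + (Q + 2) * r) / (2 * Q * (Q + 1)).
Definition a02 (r : C) := ((Q + 2) * (Q - 1) - (Q - 2) * r) / (2 * Q * (Q - 3)).
Definition a03 (r : C) :=
  (5 * Q ^+ 2 - 2 * Q - 19 - (Q - 1) * r) / (2 * (Q + 1) * (Q - 3)).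
Definition a12 (r : C) :=
  2 * (- Q ^+ 4 + 2 * Q ^+ 3 + 4 * Q ^+ 2 - 10 * Q + 1 + (Q - 1) * r)
    / (Q ^+ 2 * (Q + 1) * (Q - 3)).
Definition a13 (r : C) := - a02 r.

Definition cond_vi (r w1 w2 w3 : C) : Prop :=
  [/\ r \is Num.real,
      r ^+ 2 = (17 * Q - 1) * (Q - 1),
      w1 + w1^-1 = a01 r,
      w2 = (w1 ^+ 2 - 1) / (a12 r * w1 - a02 r)
    & w3 = (w1 ^+ 2 - 1) / (a13 r * w1 - a03 r)].
End Conds.

(* Main.v *)
Require Import Defs.
From HB Require Import structures.
From mathcomp Require Import all_boot all_order all_algebra.
From mathcomp Require Import ring lra zify.
Import Order.TTheory GRing.Theory Num.Theory.
Local Open Scope ring_scope.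

Lemma sum4 (V : nmodType) (F : 'I_4 -> V) :
  \sum_i F i = F 0 + F 1 + F 2 + F 3.
Proof.
rewrite !big_ord_recl big_ord0 addr0 !addrA.
by congr (F _ + F _ + F _ + F _); apply: val_inj.
Qed.

Section Scheme.
Variables (C : numClosedFieldType) (n : nat) (A : 'I_4 -> 'M[C]_n).
Hypothesis hA : sym_assoc_scheme A.

Lemma entry_bool x y : exists b0 b1 b2 b3 : bool,
  [/\ A 0 x y = b0%:R, A 1 x y = b1%:R, A 2 x y = b2%:R, A 3 x y = b3%:R
    & (b0 + b1 + b2 + b3 = 1)%N].
Proof.
case: hA => _ _ h01 hsum _.
have hb i : A i x y = (A i x y == 1)%:R.
  by case: (h01 i x y) => ->; rewrite ?eqxx // eq_sym oner_eq0.
exists (A 0 x y == 1), (A 1 x y == 1), (A 2 x y == 1), (A 3 x y == 1).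
split; rewrite -?hb //.
have := congr1 (fun M : 'M[C]_n => M x y) hsum.
rewrite summxE sum4 mxE {1}[A 0 x y]hb {1}[A 1 x y]hb {1}[A 2 x y]hb {1}[A 3 x y]hb.
by rewrite -!natrD => /eqP; rewrite pnatr_eq1 => /eqP.
Qed.

Lemma W_entry (w1 w2 w3 : C) x y :
  (A 0 + w1 *: A 1 + w2 *: A 2 + w3 *: A 3) x y =
  A 0 x y + w1 * A 1 x y + w2 * A 2 x y + w3 * A 3 x y.
Proof. by rewrite !mxE. Qed.

Lemma W_unit (w1 w2 w3 : C) : `|w1| = 1 -> `|w2| = 1 -> `|w3| = 1 ->
  forall x y, `|(A 0 + w1 *: A 1 + w2 *: A 2 + w3 *: A 3) x y| = 1.
Proof.
move=> h1 h2 h3 x y; rewrite W_entry.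
have [b0 [b1 [b2 [b3 [-> -> -> -> hs]]]]] := entry_bool x y.
by move: hs; case: b0; case: b1; case: b2; case: b3 => //= _;
  rewrite ?mulr0 ?mulr1 ?addr0 ?add0r ?normr1.
Qed.

Lemma W_at (w1 w2 w3 : C) x y j : (j == 1) || (j == 3) -> A j x y = 1 ->
  (A 0 + w1 *: A 1 + w2 *: A 2 + w3 *: A 3) x y = if j == 1 then w1 else w3.
Proof.
move=> hj hA1; rewrite W_entry.
have [b0 [b1 [b2 [b3 [e0 e1 e2 e3 hs]]]]] := entry_bool x y.
rewrite e0 e1 e2 e3.
case/orP: hj => /eqP ?; subst j; rewrite /=.
- have Hb : b1 by move: hA1; rewrite e1; case: (b1) => //= /eqP; rewrite eq_sym oner_eq0.
  rewrite Hb in hs *; clear -hs.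
  by move: hs; case: b0; case: b2; case: b3 => //= _; rewrite ?mulr0 ?mulr1 ?addr0 ?add0r.
- have Hb : b3 by move: hA1; rewrite e3; case: (b3) => //= /eqP; rewrite eq_sym oner_eq0.
  rewrite Hb in hs *; clear -hs.
  by move: hs; case: b0; case: b2; case: b1 => //= _; rewrite ?mulr0 ?mulr1 ?addr0 ?add0r.
Qed.
End Scheme.


Section Eigen.
Variables (C : numClosedFieldType) (n : nat) (A : 'I_4 -> 'M[C]_n) (P : 'M[C]_4).
Hypothesis hA : sym_assoc_scheme A.
Hypothesis hP : first_eigenmatrix A P.

Lemma sumE_mul (E : 'I_4 -> 'M[C]_n)
  (hE : forall i j, E i *m E j = if i == j then E i else 0) (a : 'I_4 -> C) j :
  (\sum_i a i *: E i) *m E j = a j *: E j.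
Proof.
rewrite mulmx_suml (bigD1 j) //= -scalemxAl hE eqxx big1 ?addr0 // => i /negbTE hij.
by rewrite -scalemxAl hE hij scaler0.
Qed.

Lemma A_neq0 j : P 0 j != 0 -> A j != 0.
Proof.
case: hP => E [_ hE0 hEE _ [_ hAE]] hPj; apply/eqP => hA0.
have := @sumE_mul E hEE (fun i => P i j) 0.
rewrite -hAE hA0 mul0mx => /esym/eqP; rewrite scaler_eq0 (negbTE hPj) /=.
by rewrite (negbTE (hE0 0)).
Qed.

Lemma A_entry1 j : A j != 0 -> exists x y, A j x y = 1.
Proof.
move=> hj.
case: hA => _ _ h01 _ _.
have : [exists x, exists y, A j x y != 0].
  apply: contraR hj => /existsPn hx; apply/eqP/matrixP => x y; rewrite mxE.
  by have /existsPn /(_ y) := hx x; rewrite negbK => /eqP.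
case/existsP => x /existsP [y hxy]; exists x, y.
by case: (h01 j x y) hxy => ->; rewrite ?eqxx.
Qed.

Lemma backward (w1 w2 w3 : C) :
  `|w1| = 1 -> `|w2| = 1 -> `|w3| = 1 ->
  (forall i, (P i 0 + w1 * P i 1 + w2 * P i 2 + w3 * P i 3) *
             (P i 0 + w1^* * P i 1 + w2^* * P i 2 + w3^* * P i 3) = n%:R) ->
  complex_hadamard (A 0 + w1 *: A 1 + w2 *: A 2 + w3 *: A 3).
Proof.
move=> h1 h2 h3 hev; split; first exact: W_unit.
case: hA => _ hsym h01 _ _.
case: hP => E [_ hE0 hEE hEs [_ hAE]].
have dec (v1 v2 v3 : C) : A 0 + v1 *: A 1 + v2 *: A 2 + v3 *: A 3 =
    \sum_i (P i 0 + v1 * P i 1 + v2 * P i 2 + v3 * P i 3) *: E i.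
  rewrite (hAE 0) (hAE 1) (hAE 2) (hAE 3) !scaler_sumr -!big_split /=.
  by apply: eq_bigr => i _; rewrite !scalerDl !scalerA.
have -> : \matrix_(i, j) ((A 0 + w1 *: A 1 + w2 *: A 2 + w3 *: A 3) j i)^* =
    A 0 + w1^* *: A 1 + w2^* *: A 2 + w3^* *: A 3.
  apply/matrixP => i j; rewrite mxE !W_entry.
  have hs k : A k j i = A k i j.
    by have /matrixP /(_ i j) := hsym k; rewrite mxE.
  have hc k : (A k i j)^* = A k i j by case: (h01 k i j) => ->; rewrite ?conjC0 ?conjC1.
  by rewrite !rmorphD !rmorphM /= !hs !hc.
rewrite !dec mulmx_sumr.
under eq_bigr => i _ do rewrite -scalemxAr sumE_mul // scalerA mulrC hev.
by rewrite -scaler_sumr hEs scalemx1.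
Qed.
End Eigen.


Ltac fld := field; (repeat (apply/andP; split)); try done.

Section Num.
Variable C : numClosedFieldType.

Lemma norm_trace (w : C) : `|w| = 1 -> `|w + w^-1| <= 2.
Proof.
move=> h; apply: le_trans (ler_normD _ _) _.
by rewrite normfV h invr1.
Qed.

Lemma conj_unit (w : C) : `|w| = 1 -> w^* = w^-1.
Proof.
move=> h; have hw : w != 0 by rewrite -normr_eq0 h oner_eq0.
have := normCK w; rewrite h expr1n => /esym e.
by apply: (mulfI hw); rewrite e mulfV.
Qed.

Lemma unimod (w t : C) : w != 0 -> w + w^-1 = t -> t \is Num.real ->
  `|t| < 2 -> `|w| = 1.
Proof.
move=> hw ht hr hlt.
have hc : w^* + (w^*)^-1 = t by rewrite -fmorphV -rmorphD ht; apply/CrealP.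
have hwc : w^* != 0 by rewrite conjC_eq0.
have : (w^* - w) * (w^* - w^-1) = 0.
  have -> : (w^* - w) * (w^* - w^-1) = w^* * (w^* + (w^*)^-1 - (w + w^-1)).
    by fld.
  by rewrite hc ht subrr mulr0.
move/eqP; rewrite mulf_eq0 => /orP [] ; rewrite subr_eq0 => /eqP e.
-
  have wr : w \is Num.real by rewrite CrealE e.
  have dr : w - w^-1 \is Num.real by rewrite rpredB ?rpredV.
  have : 4 <= `|t| ^+ 2.
    rewrite real_normK // -ht.
    have -> : (w + w^-1) ^+ 2 = (w - w^-1) ^+ 2 + 4 by fld.
    by rewrite lerDr -real_normK // exprn_ge0.
  have : `|t| ^+ 2 < 2 ^+ 2.
    by rewrite ltr_pXn2r ?nnegrE ?normr_ge0 ?ler0n.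
  by move=> h1 h2; have := le_lt_trans h2 h1; rewrite expr2 -natrM ltxx.
- have := normCK w; rewrite e mulfV // => /eqP; rewrite sqrp_eq1 ?normr_ge0 //.
  by move/eqP.
Qed.
End Num.


Section QNum.
Variables (C : numClosedFieldType) (q : nat).
Hypothesis hq : (4 <= q)%N.
Local Notation Q := (q%:R : C).

Lemma nQ : ((q ^ 2).-1)%:R = Q ^+ 2 - 1 :> C.
Proof. by rewrite -subn1 natrB ?natrX //; nia. Qed.

Lemma Qsub k : (k <= q)%N -> Q - k%:R = (q - k)%:R.
Proof. by move=> h; rewrite natrB. Qed.

Lemma natr_neq0 k : (k != 0)%N -> (k%:R : C) != 0.
Proof. by rewrite pnatr_eq0. Qed.

Lemma Q_neq0 : Q != 0. Proof. by apply: natr_neq0; lia. Qed.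
Lemma Q1_neq0 : Q + 1 != 0. Proof. by rewrite -(natrD _ q 1); apply: natr_neq0; lia. Qed.
Lemma Q2_neq0 : Q + 2 != 0. Proof. by rewrite -natrD; apply: natr_neq0; lia. Qed.
Lemma Qm1_neq0 : Q - 1 != 0. Proof. by rewrite (Qsub 1) //; [apply: natr_neq0 | ]; lia. Qed.
Lemma Qm2_neq0 : Q - 2 != 0. Proof. by rewrite Qsub //; [apply: natr_neq0 | ]; lia. Qed.
Lemma Qm3_neq0 : Q - 3 != 0. Proof. by rewrite Qsub //; [apply: natr_neq0 | ]; lia. Qed.
Lemma two_neq0 : (2 : C) != 0. Proof. by apply: natr_neq0. Qed.

Lemma no_i (w : C) : `|w| = 1 -> w + w^-1 + Q ^+ 2 - 3 = 0 -> False.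
Proof.
move=> h1 h.
have e : w + w^-1 = - ((q ^ 2 - 3)%N%:R).
  rewrite natrB ?natrX; last by nia.
  by apply/eqP; rewrite -subr_eq0; apply/eqP; rewrite -h; ring.
have := @norm_trace _ w h1; rewrite e normrN normr_nat ler_nat; nia.
Qed.
End QNum.


Definition Lk {C : fieldType} (s a02 a03 a12 a13 p0 p1 p2 p3 : C) :=
  let D := 4 - s ^+ 2 in
  let cp := D * p0 + p2 * (2 * a02 - a12 * s) + p3 * (2 * a03 - a13 * s) in
  let ep := D * p1 + p2 * (2 * a12 - a02 * s) + p3 * (2 * a13 - a03 * s) in
  cp ^+ 2 + cp * ep * s + ep ^+ 2.

Section VI.
Variables (C : numClosedFieldType) (q : nat).
Hypothesis hq : (4 <= q)%N.
Local Notation Q := (q%:R : C).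
Variable r : C.
Hypothesis hr : r ^+ 2 = (17 * Q - 1) * (Q - 1).

Ltac prep := (have hr0 : r ^+ 2 - (17 * Q - 1) * (Q - 1) = 0 by rewrite hr subrr);
  have h0 : Q != 0 := Q_neq0 _ _ hq; have h1 : Q + 1 != 0 := Q1_neq0 _ _ hq;
  have h3 : Q - 3 != 0 := Qm3_neq0 _ _ hq; have h2 : (2:C) != 0 := two_neq0 _;
  apply/eqP; rewrite -subr_eq0; apply/eqP.

Lemma U2_id : a12 q r ^+ 2 - a12 q r * a02 q r * a01 q r + a02 q r ^+ 2 = 4 - a01 q r ^+ 2.
Proof.
prep. transitivity ((r ^+ 2 - (17 * Q - 1) * (Q - 1)) * (2*r*Q^+3 - 2*r*Q^+2 - 8*r*Q + 8*r - 2*Q^+4 - 12*Q^+3 + 6*Q^+2 + 80*Q - 8) / (2 ^+ 2*Q ^+ 4*(Q + 1) ^+ 2*(Q - 3) ^+ 2)); last by rewrite hr0 !mul0r.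
rewrite /a12 /a02 /a01 /=. fld.
Qed.

Lemma U3_id : a13 q r ^+ 2 - a13 q r * a03 q r * a01 q r + a03 q r ^+ 2 = 4 - a01 q r ^+ 2.
Proof.
prep. transitivity ((r ^+ 2 - (17 * Q - 1) * (Q - 1)) * (r*Q^+3 - r*Q^+2 - 4*r*Q + 4*r - Q^+4 - 6*Q^+3 + 3*Q^+2 + 40*Q - 4) / (2 ^+ 3*Q ^+ 2*(Q + 1) ^+ 2*(Q - 3) ^+ 2)); last by rewrite hr0 !mul0r.
rewrite /a13 /a03 /a02 /a01 /=. fld.
Qed.

Lemma L0_id : Lk (a01 q r) (a02 q r) (a03 q r) (a12 q r) (a13 q r) 1 (Q ^+ 2 / 2 - Q) (Q ^+ 2 / 2) (Q - 2)
  = (Q ^+ 2 - 1) * (4 - a01 q r ^+ 2) ^+ 2.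
Proof.
prep. transitivity ((r ^+ 2 - (17 * Q - 1) * (Q - 1)) * (- 4*r^+3*Q^+10 - 20*r^+3*Q^+9 - 4*r^+3*Q^+8 + 132*r^+3*Q^+7 + 216*r^+3*Q^+6 - 96*r^+3*Q^+5 - 512*r^+3*Q^+4 - 448*r^+3*Q^+3 - 128*r^+3*Q^+2 + 28*r^+2*Q^+11 + 64*r^+2*Q^+10 - 208*r^+2*Q^+9 - 472*r^+2*Q^+8 + 564*r^+2*Q^+7 + 1112*r^+2*Q^+6 - 1216*r^+2*Q^+5 - 2240*r^+2*Q^+4 - 320*r^+2*Q^+3 + 384*r^+2*Q^+2 + 20*r*Q^+12 + 284*r*Q^+11 + 128*r*Q^+10 - 2328*r*Q^+9 - 1852*r*Q^+8 + 5148*r*Q^+7 + 3752*r*Q^+6 - 2016*r*Q^+5 + 1408*r*Q^+4 + 1984*r*Q^+3 - 384*r*Q^+2 - 300*Q^+13 - 520*Q^+12 + 2468*Q^+11 + 2872*Q^+10 - 6724*Q^+9 - 2072*Q^+8 + 10636*Q^+7 + 6440*Q^+6 + 3328*Q^+5 + 1344*Q^+4 - 1216*Q^+3 + 128*Q^+2) / (2 ^+ 6*Q ^+ 6*(Q + 1) ^+ 5*(Q - 3) ^+ 2)); last by rewrite hr0 !mul0r.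
rewrite /Lk /a13 /a12 /a03 /a02 /a01 /=. fld.
Qed.

Lemma L1_id : Lk (a01 q r) (a02 q r) (a03 q r) (a12 q r) (a13 q r) 1 (Q / 2) (- (Q / 2)) (-1)
  = (Q ^+ 2 - 1) * (4 - a01 q r ^+ 2) ^+ 2.
Proof.
prep. transitivity ((r ^+ 2 - (17 * Q - 1) * (Q - 1)) * (- 4*r^+3*Q^+8 - 28*r^+3*Q^+7 - 52*r^+3*Q^+6 + 60*r^+3*Q^+5 + 328*r^+3*Q^+4 + 400*r^+3*Q^+3 + 160*r^+3*Q^+2 + 28*r^+2*Q^+9 + 120*r^+2*Q^+8 + 8*r^+2*Q^+7 - 528*r^+2*Q^+6 - 628*r^+2*Q^+5 - 264*r^+2*Q^+4 - 560*r^+2*Q^+3 - 480*r^+2*Q^+2 + 20*r*Q^+10 + 324*r*Q^+9 + 672*r*Q^+8 - 1192*r*Q^+7 - 3788*r*Q^+6 - 2124*r*Q^+5 - 456*r*Q^+4 - 80*r*Q^+3 + 480*r*Q^+2 - 300*Q^+11 - 1120*Q^+10 + 348*Q^+9 + 4712*Q^+8 + 5212*Q^+7 + 4368*Q^+6 + 2692*Q^+5 + 392*Q^+4 + 240*Q^+3 - 160*Q^+2) / (2 ^+ 6*Q ^+ 6*(Q + 1) ^+ 5*(Q - 3) ^+ 2)); last by rewrite hr0 !mul0r.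
rewrite /Lk /a13 /a12 /a03 /a02 /a01 /=. fld.
Qed.

Lemma L2_id : Lk (a01 q r) (a02 q r) (a03 q r) (a12 q r) (a13 q r) 1 (- (Q / 2) + 1) (- (Q / 2)) (Q - 2)
  = (Q ^+ 2 - 1) * (4 - a01 q r ^+ 2) ^+ 2.
Proof.
prep. transitivity ((r ^+ 2 - (17 * Q - 1) * (Q - 1)) * (- 2*r^+3*Q^+10 + 36*r^+3*Q^+8 + 24*r^+3*Q^+7 - 210*r^+3*Q^+6 - 264*r^+3*Q^+5 + 320*r^+3*Q^+4 + 672*r^+3*Q^+3 + 288*r^+3*Q^+2 + 6*r^+2*Q^+11 - 22*r^+2*Q^+10 - 60*r^+2*Q^+9 + 212*r^+2*Q^+8 + 222*r^+2*Q^+7 - 526*r^+2*Q^+6 - 168*r^+2*Q^+5 + 48*r^+2*Q^+4 - 1152*r^+2*Q^+3 - 864*r^+2*Q^+2 + 26*r*Q^+12 - 20*r*Q^+11 - 474*r*Q^+10 + 176*r*Q^+9 + 2566*r*Q^+8 + 636*r*Q^+7 - 3846*r*Q^+6 - 4152*r*Q^+5 - 2208*r*Q^+4 + 288*r*Q^+3 + 864*r*Q^+2 - 30*Q^+13 + 74*Q^+12 + 434*Q^+11 - 622*Q^+10 - 2466*Q^+9 - 274*Q^+8 + 5478*Q^+7 + 7462*Q^+6 + 4584*Q^+5 + 1840*Q^+4 + 192*Q^+3 - 288*Q^+2) / (2 ^+ 6*Q ^+ 6*(Q + 1) ^+ 5*(Q - 3) ^+ 2)); last by rewrite hr0 !m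ul0r.
rewrite /Lk /a13 /a12 /a03 /a02 /a01 /=. fld.
Qed.

Lemma L3_id : Lk (a01 q r) (a02 q r) (a03 q r) (a12 q r) (a13 q r) 1 (- (Q / 2)) (Q / 2) (-1)
  = (Q ^+ 2 - 1) * (4 - a01 q r ^+ 2) ^+ 2.
Proof.
prep. transitivity ((r ^+ 2 - (17 * Q - 1) * (Q - 1)) * (- 4*r^+3*Q^+8 - 4*r^+3*Q^+7 + 60*r^+3*Q^+6 + 100*r^+3*Q^+5 - 200*r^+3*Q^+4 - 528*r^+3*Q^+3 - 288*r^+3*Q^+2 - 4*r^+2*Q^+9 - 48*r^+2*Q^+8 + 128*r^+2*Q^+7 + 648*r^+2*Q^+6 - 556*r^+2*Q^+5 - 2616*r^+2*Q^+4 - 720*r^+2*Q^+3 + 864*r^+2*Q^+2 + 84*r*Q^+10 - 116*r*Q^+9 - 1120*r*Q^+8 + 888*r*Q^+7 + 3748*r*Q^+6 - 724*r*Q^+5 + 1224*r*Q^+4 + 3024*r*Q^+3 - 864*r*Q^+2 + 180*Q^+11 - 24*Q^+10 - 2860*Q^+9 - 728*Q^+8 + 11468*Q^+7 + 7064*Q^+6 + 1180*Q^+5 + 1592*Q^+4 - 1776*Q^+3 + 288*Q^+2) / (2 ^+ 6*Q ^+ 6*(Q + 1) ^+ 5*(Q - 3) ^+ 2)); last by rewrite hr0 !mul0r.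
rewrite /Lk /a13 /a12 /a03 /a02 /a01 /=. fld.
Qed.
End VI.


Section Gen.
Variable F : fieldType.

Lemma lin_form (s a b y : F) : y ^+ 2 - s * y + 1 = 0 ->
  a ^+ 2 - a * b * s + b ^+ 2 != 0 -> a * y - b != 0 ->
  (y ^+ 2 - 1) / (a * y - b) =
  ((2 * b - a * s) + (2 * a - b * s) * y) / (a ^+ 2 - a * b * s + b ^+ 2).
Proof.
move=> hy hD hd; apply/eqP; rewrite eqr_div //; apply/eqP.
have e : ((2 * b - a * s) + (2 * a - b * s) * y) * (a * y - b) -
   (y ^+ 2 - 1) * (a ^+ 2 - a * b * s + b ^+ 2) =
   ((2 * a - b * s) * a - (a ^+ 2 - a * b * s + b ^+ 2)) * (y ^+ 2 - s * y + 1).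
  by ring.
by apply/eqP; rewrite eq_sym -subr_eq0 e hy mulr0.
Qed.

Lemma prod_form (p0 p1 p2 p3 w x A2 B2 A3 B3 D s : F) : D != 0 ->
  w + x = s -> w * x = 1 ->
  (p0 + w * p1 + (A2 + B2 * w) / D * p2 + (A3 + B3 * w) / D * p3) *
  (p0 + x * p1 + (A2 + B2 * x) / D * p2 + (A3 + B3 * x) / D * p3) =
  ((D * p0 + p2 * A2 + p3 * A3) ^+ 2 +
   (D * p0 + p2 * A2 + p3 * A3) * (D * p1 + p2 * B2 + p3 * B3) * s +
   (D * p1 + p2 * B2 + p3 * B3) ^+ 2) / D ^+ 2.
Proof.
move=> hD hs hx.
transitivity (((D * p0 + p2 * A2 + p3 * A3) ^+ 2 +
   (D * p0 + p2 * A2 + p3 * A3) * (D * p1 + p2 * B2 + p3 * B3) * (w + x) +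
   (D * p1 + p2 * B2 + p3 * B3) ^+ 2 * (w * x)) / D ^+ 2).
  by field.
by rewrite hs hx mulr1.
Qed.

Lemma unit_form (a b s w x : F) : 4 - s ^+ 2 != 0 -> w + x = s -> w * x = 1 ->
  a ^+ 2 - a * b * s + b ^+ 2 = 4 - s ^+ 2 ->
  ((2 * b - a * s) + (2 * a - b * s) * w) / (4 - s ^+ 2) *
  (((2 * b - a * s) + (2 * a - b * s) * x) / (4 - s ^+ 2)) = 1.
Proof.
move=> hD hs hx hU.
transitivity (((2 * b - a * s) ^+ 2 + (2 * b - a * s) * (2 * a - b * s) * (w + x) +
  (2 * a - b * s) ^+ 2 * (w * x)) / (4 - s ^+ 2) ^+ 2).
  by field.
rewrite hs hx mulr1.
transitivity ((4 - s ^+ 2) * (a ^+ 2 - a * b * s + b ^+ 2) / (4 - s ^+ 2) ^+ 2).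
  by congr (_ / _); ring.
by rewrite hU -expr2 divff // expf_neq0.
Qed.
End Gen.


Ltac pos := repeat first [ assumption | apply: mulr_gt0 | apply: addr_gt0
  | apply: divr_gt0 | apply: exprn_gt0 | (rewrite invr_gt0) | (rewrite ltr0n //) ].

Lemma norm_lt2 (C : numClosedFieldType) (t : C) : t \is Num.real ->
  0 < 2 - t -> 0 < t + 2 -> `|t| < 2.
Proof.
move=> hr h1 h2; rewrite real_ltr_norml //; apply/andP; split.
  by rewrite -subr_gt0 opprK.
by rewrite -subr_gt0.
Qed.

Section QNum2.
Variables (C : numClosedFieldType) (q : nat).
Hypothesis hq : (4 <= q)%N.
Local Notation Q := (q%:R : C).

Lemma Qgt k : (k < q)%N -> 0 < Q - k%:R.
Proof. by move=> h; rewrite Qsub ?ltr0n ?subn_gt0 // ltnW. Qed.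

Lemma Qpos : 0 < Q. Proof. by rewrite ltr0n; lia. Qed.
Lemma Qp1 : 0 < Q + 1. Proof. by apply: addr_gt0; [exact: Qpos | exact: ltr01]. Qed.
Lemma Qp2 : 0 < Q + 2. Proof. by apply: addr_gt0; [exact: Qpos | rewrite ltr0n]. Qed.
Lemma Qp3 : 0 < Q + 3. Proof. by apply: addr_gt0; [exact: Qpos | rewrite ltr0n]. Qed.
Lemma Qm1 : 0 < Q - 1. Proof. by have := Qgt 1; rewrite mulr1n; apply; lia. Qed.
Lemma Qm2 : 0 < Q - 2. Proof. by apply: Qgt; lia. Qed.
Lemma Qm3 : 0 < Q - 3. Proof. by apply: Qgt; lia. Qed.
Lemma Q5 : 0 < Q ^+ 2 - 5.
Proof.
have -> : Q ^+ 2 - 5 = (Q - 3) * (Q + 3) + 4 by ring.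
by apply: addr_gt0; [apply: mulr_gt0; [exact: Qm3 | exact: Qp3] | rewrite ltr0n].
Qed.
Lemma Q4 : 0 < Q ^+ 2 - 4.
Proof.
have -> : Q ^+ 2 - 4 = (Q - 2) * (Q + 2) by ring.
by apply: mulr_gt0; [exact: Qm2 | exact: Qp2].
Qed.

Ltac facts := have := Qpos; have := Qp1; have := Qp2; have := Qp3; have := Qm1;
  have := Qm2; have := Qm3; have := Q5; have := Q4; move=> *.

Lemma realQ : Q \is Num.real. Proof. exact: realn. Qed.

Ltac realt := rewrite /=; repeat first [ assumption | apply: rpredD | apply: rpredM
  | (rewrite rpredV) | (rewrite rpredN) | apply: rpredX | apply: rpredB | apply: realn
  | apply: rpred1 | apply: rpred0 ].

Lemma t_iii : `|2 * (Q ^+ 2 - 6) / (Q ^+ 2 - 4)| < 2 /\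
   2 * (Q ^+ 2 - 6) / (Q ^+ 2 - 4) \is Num.real.
Proof.
facts; have hQ4 : Q ^+ 2 - 4 != 0 by rewrite gt_eqF.
split; last by realt.
apply: norm_lt2; first by realt.
- have -> : 2 - 2 * (Q ^+ 2 - 6) / (Q ^+ 2 - 4) = 4 / (Q ^+ 2 - 4) by field.
  by pos.
- have -> : 2 * (Q ^+ 2 - 6) / (Q ^+ 2 - 4) + 2 = 4 * (Q ^+ 2 - 5) / (Q ^+ 2 - 4) by field.
  by pos.
Qed.

Lemma t_iv : `|- (2 * (Q ^+ 2 - 2)) / Q ^+ 2| < 2 /\
   - (2 * (Q ^+ 2 - 2)) / Q ^+ 2 \is Num.real.
Proof.
facts; have hQ : Q != 0 by rewrite gt_eqF.
split; last by realt.
apply: norm_lt2; first by realt.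
- have -> : 2 - - (2 * (Q ^+ 2 - 2)) / Q ^+ 2 = 4 * ((Q - 1) * (Q + 1)) / Q ^+ 2 by field.
  by pos.
- have -> : - (2 * (Q ^+ 2 - 2)) / Q ^+ 2 + 2 = 4 / Q ^+ 2 by field.
  by pos.
Qed.

Lemma t_v : `|- (2 / Q)| < 2 /\ - (2 / Q) \is Num.real.
Proof.
facts; have hQ : Q != 0 by rewrite gt_eqF.
split; last by realt.
apply: norm_lt2; first by realt.
- have -> : 2 - - (2 / Q) = 2 * (Q + 1) / Q by field.
  by pos.
- have -> : - (2 / Q) + 2 = 2 * (Q - 1) / Q by field.
  by pos.
Qed.

Variable r : C.
Hypothesis hr : r ^+ 2 = (17 * Q - 1) * (Q - 1).

Lemma a_real : r \is Num.real -> [/\ a01 q r \is Num.real, a02 q r \is Num.real,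
  a03 q r \is Num.real, a12 q r \is Num.real & a13 q r \is Num.real].
Proof. by move=> hrr; split; rewrite /a01 /a02 /a03 /a12 /a13; realt. Qed.

Lemma t_vi : 0 < r -> `|a01 q r| < 2.
Proof.
move=> rp; facts; have hQ : Q != 0 by rewrite gt_eqF.
have hQ1 : Q + 1 != 0 by rewrite gt_eqF.
have h2 : (2:C) != 0 := two_neq0 _.
have hrr : r \is Num.real by rewrite realE ltW.
apply: norm_lt2; first by case: (a_real hrr).
- set Z := 4 * Q * (Q + 1) + (Q - 1) * (Q - 2).
  set X := (Q + 2) * r.
  have hZ : 0 < Z by pos.
  have hX : 0 < X by pos.
  have hZX : Z + X != 0 by rewrite gt_eqF //; pos.
  have -> : 2 - a01 q r = (Z ^+ 2 - X ^+ 2) / ((Z + X) * (2 * Q * (Q + 1))).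
    rewrite /a01 /= /Z /X; field.
    by rewrite hQ hQ1 -/X -/Z hZX.
  have -> : Z ^+ 2 - X ^+ 2 = 8 * Q * (Q - 3) ^+ 2 * (Q + 1).
    by rewrite /X exprMn hr /Z; ring.
  by pos.
- have -> : a01 q r + 2 = ((Q + 2) * r + (3 * (Q * Q) + 7 * (Q - 1) + 5)) / (2 * Q * (Q + 1)).
    by rewrite /a01 /=; fld.
  by pos.
Qed.

Lemma no_vi (w : C) : r \is Num.real -> r < 0 -> `|w| = 1 -> w + w^-1 = a01 q r -> False.
Proof.
move=> hrr rn h1 hs; facts; have hQ : Q != 0 by rewrite gt_eqF.
have hQ1 : Q + 1 != 0 by rewrite gt_eqF.
have h2 : (2:C) != 0 := two_neq0 _.
have hb : `|a01 q r| <= 2 by rewrite -hs; exact: norm_trace.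
have ar : a01 q r \is Num.real by case: (a_real hrr).
move: hb; rewrite real_ler_norml // => /andP [hlo _].
have e : a01 q r + 2 = ((Q + 2) * r + (3 * (Q * Q) + 7 * (Q - 1) + 5)) / (2 * Q * (Q + 1)).
  by rewrite /a01 /=; fld.
set Z := 3 * (Q * Q) + 7 * (Q - 1) + 5 in e.
set rho := - ((Q + 2) * r).
have hZ : 0 < Z by pos.
have hrho : 0 < rho by rewrite /rho oppr_gt0 pmulr_rlt0 //.
have h0 : 0 <= Z - rho.
  have -> : Z - rho = (a01 q r + 2) * (2 * Q * (Q + 1)).
    by rewrite e /rho; fld.
  have ha : 0 <= a01 q r - (-2) by rewrite subr_ge0.
  rewrite opprK in ha.
  by apply: mulr_ge0; [exact: ha | apply: ltW; pos].
have hle : rho * rho <= Z * Z.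
  have hrZ : rho <= Z by rewrite -subr_ge0.
  by apply: ler_pM => //; apply: ltW.
have hgt : Z * Z < rho * rho.
  rewrite -subr_gt0.
  have -> : rho * rho - Z * Z = 8 * Q * (Q + 1) * (Q ^+ 2 - 5).
    have -> : rho * rho - Z * Z = (Q + 2) ^+ 2 * r ^+ 2 - Z * Z by rewrite /rho; ring.
    by rewrite hr /Z; ring.
  by pos.
by have := lt_le_trans hgt hle; rewrite ltxx.
Qed.
End QNum2.


Section Gen2.
Variable F : fieldType.
Lemma ev3 (p0 p1 p2 p3 w t : F) : w != 0 -> w + w^-1 = t ->
  (p0 + w * p1 + (-1) * p2 + w * p3) * (p0 + w^-1 * p1 + (-1) * p2 + w^-1 * p3) =
  (p0 - p2) ^+ 2 + (p1 + p3) ^+ 2 + (p0 - p2) * (p1 + p3) * t.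
Proof. by move=> hw <-; field. Qed.
Lemma ev4 (p0 p1 p2 p3 w t : F) : w != 0 -> w + w^-1 = t ->
  (p0 + 1 * p1 + w * p2 + 1 * p3) * (p0 + 1 * p1 + w^-1 * p2 + 1 * p3) =
  (p0 + p1 + p3) ^+ 2 + p2 ^+ 2 + (p0 + p1 + p3) * p2 * t.
Proof. by move=> hw <-; field. Qed.
Lemma ev5 (p0 p1 p2 p3 w t : F) : w != 0 -> w + w^-1 = t ->
  (p0 + w * p1 + w^-1 * p2 + 1 * p3) * (p0 + w^-1 * p1 + w * p2 + 1 * p3) =
  (p0 + p3) ^+ 2 + p1 ^+ 2 + p2 ^+ 2 + (p0 + p3) * (p1 + p2) * t + p1 * p2 * (t ^+ 2 - 2).
Proof. by move=> hw <-; field. Qed.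
End Gen2.

Section Main.
Variables (C : numClosedFieldType) (q : nat).
Hypothesis hq : (4 <= q)%N.
Local Notation Q := (q%:R : C).

Lemma Pq_ev (v1 v2 v3 u1 u2 u3 : C) :
  (1 + v1 * (Q ^+ 2 / 2 - Q) + v2 * (Q ^+ 2 / 2) + v3 * (Q - 2)) *
  (1 + u1 * (Q ^+ 2 / 2 - Q) + u2 * (Q ^+ 2 / 2) + u3 * (Q - 2)) = Q ^+ 2 - 1 ->
  (1 + v1 * (Q / 2) + v2 * (- (Q / 2)) + v3 * (-1)) *
  (1 + u1 * (Q / 2) + u2 * (- (Q / 2)) + u3 * (-1)) = Q ^+ 2 - 1 ->
  (1 + v1 * (- (Q / 2) + 1) + v2 * (- (Q / 2)) + v3 * (Q - 2)) *
  (1 + u1 * (- (Q / 2) + 1) + u2 * (- (Q / 2)) + u3 * (Q - 2)) = Q ^+ 2 - 1 ->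
  (1 + v1 * (- (Q / 2)) + v2 * (Q / 2) + v3 * (-1)) *
  (1 + u1 * (- (Q / 2)) + u2 * (Q / 2) + u3 * (-1)) = Q ^+ 2 - 1 ->
  forall i, (Pq C q i 0 + v1 * Pq C q i 1 + v2 * Pq C q i 2 + v3 * Pq C q i 3) *
            (Pq C q i 0 + u1 * Pq C q i 1 + u2 * Pq C q i 2 + u3 * Pq C q i 3) =
            ((q ^ 2).-1)%:R.
Proof.
move=> R0 R1 R2 R3 i; rewrite nQ //.
by case: i => [[|[|[|[|//]]]] hi]; rewrite /Pq !mxE /=.
Qed.
End Main.


Section Cases.
Variables (C : numClosedFieldType) (q : nat).
Hypothesis hq : (4 <= q)%N.
Local Notation Q := (q%:R : C).
Variables (A : 'I_4 -> 'M[C]_((q ^ 2).-1)).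
Hypotheses (hA : sym_assoc_scheme A) (hP : first_eigenmatrix A (Pq C q)).

Ltac qfacts := have hQ0 : Q != 0 := Q_neq0 _ _ hq; have hQ1 : Q + 1 != 0 := Q1_neq0 _ _ hq;
  have hQ3 : Q - 3 != 0 := Qm3_neq0 _ _ hq; have h2 : (2:C) != 0 := two_neq0 _;
  have hQ4 : Q ^+ 2 - 4 != 0 by rewrite gt_eqF // Q4.

Lemma had_iii w1 w2 w3 : w1 != 0 -> cond_iii q w1 w2 w3 ->
  complex_hadamard (A 0 + w1 *: A 1 + w2 *: A 2 + w3 *: A 3).
Proof.
move=> hw; rewrite /cond_iii /= => -[ht [-> ->]].
qfacts.
have [tl tr] := @t_iii C q hq.
have u := @unimod _ _ _ hw ht tr tl.
have cw := @conj_unit _ _ u.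
apply: (@backward _ _ _ _ hA hP) => //; first by rewrite normrN normr1.
apply: (@Pq_ev C q hq); rewrite cw rmorphN1 (@ev3 _ _ _ _ _ _ _ hw ht); fld.
Qed.

Lemma had_iv w1 w2 w3 : w2 != 0 -> cond_iv q w1 w2 w3 ->
  complex_hadamard (A 0 + w1 *: A 1 + w2 *: A 2 + w3 *: A 3).
Proof.
move=> hw; rewrite /cond_iv /= => -[-> [-> ht]].
qfacts.
have [tl tr] := @t_iv C q hq.
have u := @unimod _ _ _ hw ht tr tl.
have cw := @conj_unit _ _ u.
apply: (@backward _ _ _ _ hA hP) => //; try by rewrite normr1.
apply: (@Pq_ev C q hq); rewrite cw rmorph1 (@ev4 _ _ _ _ _ _ _ hw ht); fld.
Qed.

Lemma had_v w1 w2 w3 : w1 != 0 -> cond_v q w1 w2 w3 ->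
  complex_hadamard (A 0 + w1 *: A 1 + w2 *: A 2 + w3 *: A 3).
Proof.
move=> hw; rewrite /cond_v /= => -[ht [-> ->]].
qfacts.
have [tl tr] := @t_v C q hq.
have u := @unimod _ _ _ hw ht tr tl.
have cw := @conj_unit _ _ u.
apply: (@backward _ _ _ _ hA hP) => //; first (by rewrite normfV u invr1); first by rewrite normr1.
have cwi : (w1^-1)^* = w1 by rewrite -cw conjCK.
apply: (@Pq_ev C q hq); rewrite cwi cw rmorph1 (@ev5 _ _ _ _ _ _ _ hw ht); fld.
Qed.

Lemma had_vi w1 w2 w3 r : w1 != 0 -> w2 != 0 -> w3 != 0 -> 0 < r ->
  cond_vi q r w1 w2 w3 ->
  complex_hadamard (A 0 + w1 *: A 1 + w2 *: A 2 + w3 *: A 3).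
Proof.
move=> hw hw2 hw3 rp [hrr hr hs e2 e3].
qfacts.
have tl := @t_vi C q hq r hr rp.
have [sr a2r a3r a12r a13r] := @a_real C q r hrr.
have u := @unimod _ _ _ hw hs sr tl.
have cw := @conj_unit _ _ u.
have hwx : w1 * w1^-1 = 1 by rewrite mulfV.
have hyw : w1 ^+ 2 - a01 q r * w1 + 1 = 0 by rewrite -hs; field.
have hyx : w1^-1 ^+ 2 - a01 q r * w1^-1 + 1 = 0 by rewrite -hs; field.
have hD : 4 - a01 q r ^+ 2 != 0.
  rewrite gt_eqF // subr_gt0 -real_normK //.
  have -> : (4 : C) = 2 ^+ 2 by rewrite expr2 -natrM.
  by rewrite ltr_pXn2r ?nnegrE ?normr_ge0 ?ler0n.
have U2 := @U2_id C q hq r hr.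
have U3 := @U3_id C q hq r hr.
have G2w : a12 q r * w1 - a02 q r != 0.
  by apply: contraNneq hw2 => h; rewrite e2 h invr0 mulr0.
have G3w : a13 q r * w1 - a03 q r != 0.
  by apply: contraNneq hw3 => h; rewrite e3 h invr0 mulr0.
have cG2 : (a12 q r * w1 - a02 q r)^* = a12 q r * w1^-1 - a02 q r.
  by rewrite rmorphB rmorphM /= (conj_Creal a12r) (conj_Creal a2r) cw.
have cG3 : (a13 q r * w1 - a03 q r)^* = a13 q r * w1^-1 - a03 q r.
  by rewrite rmorphB rmorphM /= (conj_Creal a13r) (conj_Creal a3r) cw.
have G2x : a12 q r * w1^-1 - a02 q r != 0 by rewrite -cG2 conjC_eq0.
have G3x : a13 q r * w1^-1 - a03 q r != 0 by rewrite -cG3 conjC_eq0.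
have ew2 := e2; rewrite (@lin_form _ _ _ _ _ hyw _ G2w) U2 // in ew2.
have ew3 := e3; rewrite (@lin_form _ _ _ _ _ hyw _ G3w) U3 // in ew3.
have cN : (w1 ^+ 2 - 1)^* = w1^-1 ^+ 2 - 1.
  by rewrite rmorphB rmorphXn rmorph1 /= cw.
have ex2 : w2^* = (w1^-1 ^+ 2 - 1) / (a12 q r * w1^-1 - a02 q r).
  by rewrite e2 fmorph_div /= cG2 cN.
have ex3 : w3^* = (w1^-1 ^+ 2 - 1) / (a13 q r * w1^-1 - a03 q r).
  by rewrite e3 fmorph_div /= cG3 cN.
rewrite (@lin_form _ _ _ _ _ hyx _ G2x) U2 // in ex2.
rewrite (@lin_form _ _ _ _ _ hyx _ G3x) U3 // in ex3.
have un2 : `|w2| = 1.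
  apply/eqP; rewrite -sqrp_eq1 ?normr_ge0 // normCK ex2 ew2.
  by rewrite (@unit_form _ _ _ _ _ _ hD hs hwx U2).
have un3 : `|w3| = 1.
  apply/eqP; rewrite -sqrp_eq1 ?normr_ge0 // normCK ex3 ew3.
  by rewrite (@unit_form _ _ _ _ _ _ hD hs hwx U3).
apply: (@backward _ _ _ _ hA hP) => //.
have hD2 : (4 - a01 q r ^+ 2) ^+ 2 != 0 by rewrite expf_neq0.
apply: (@Pq_ev C q hq); rewrite ex2 ex3 cw ew2 ew3 (@prod_form _ _ _ _ _ _ _ _ _ _ _ _ _ hD hs hwx).
- by have := @L0_id C q hq r hr; rewrite /Lk /= => ->; rewrite mulfK.
- by have := @L1_id C q hq r hr; rewrite /Lk /= => ->; rewrite mulfK.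
- by have := @L2_id C q hq r hr; rewrite /Lk /= => ->; rewrite mulfK.
- by have := @L3_id C q hq r hr; rewrite /Lk /= => ->; rewrite mulfK.
Qed.
End Cases.


Theorem corollary4p2 (C : numClosedFieldType) (q : nat) (hq : (4 <= q)%N)
    (A : 'I_4 -> 'M[C]_((q ^ 2).-1))
    (hA : sym_assoc_scheme A) (hP : first_eigenmatrix A (Pq C q))
    (w1 w2 w3 : C) (hw1 : w1 != 0) (hw2 : w2 != 0) (hw3 : w3 != 0)
    (hcond : cond_i q w1 w2 w3 \/ cond_ii q w1 w2 w3 \/ cond_iii q w1 w2 w3 \/
             cond_iv q w1 w2 w3 \/ cond_v q w1 w2 w3 \/
             exists r : C, cond_vi q r w1 w2 w3) :
  complex_hadamard (A 0 + w1 *: A 1 + w2 *: A 2 + w3 *: A 3)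
  <-> (cond_iii q w1 w2 w3 \/ cond_iv q w1 w2 w3 \/ cond_v q w1 w2 w3 \/
       exists r : C, 0 < r /\ cond_vi q r w1 w2 w3).
Proof.
split; last first.
  case=> [c|[c|[c|[r [rp c]]]]].
  - exact: (@had_iii C q hq A hA hP w1 w2 w3 hw1 c).
  - exact: (@had_iv C q hq A hA hP w1 w2 w3 hw2 c).
  - exact: (@had_v C q hq A hA hP w1 w2 w3 hw1 c).
  - exact: (@had_vi C q hq A hA hP w1 w2 w3 r hw1 hw2 hw3 rp c).
move=> [hunit _].
have hQ0 : (q%:R : C) != 0 := Q_neq0 _ _ hq.
have hQ2 : (q%:R : C) - 2 != 0 := Qm2_neq0 _ _ hq.
have h2 : (2 : C) != 0 := two_neq0 _.
have P01 : Pq C q 0 1 != 0.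
  rewrite /Pq mxE /=.
  have -> : (q%:R : C) ^+ 2 / 2 - q%:R = q%:R * (q%:R - 2) / 2 by field.
  by rewrite mulf_neq0 ?invr_eq0 // mulf_neq0.
have P03 : Pq C q 0 3 != 0 by rewrite /Pq mxE /=.
have u1 : `|w1| = 1.
  have [x [y hxy]] := @A_entry1 C _ A hA 1 (@A_neq0 C _ A _ hP 1 P01).
  by rewrite -(hunit x y) (@W_at C _ A hA w1 w2 w3 x y 1).
have u3 : `|w3| = 1.
  have [x [y hxy]] := @A_entry1 C _ A hA 3 (@A_neq0 C _ A _ hP 3 P03).
  by rewrite -(hunit x y) (@W_at C _ A hA w1 w2 w3 x y 3).
case: hcond => [c|[c|[c|[c|[c|[r c]]]]]].
- by exfalso; apply: (@no_i C q hq w3 u3); case: c => _ [].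
- by exfalso; apply: (@no_i C q hq w3 u3); case: c.
- by left.
- by right; left.
- by right; right; left.
case: (c) => hrr hr hs _ _.
have hc : (17 * (q%:R : C) - 1) * (q%:R - 1) != 0.
  rewrite mulf_neq0 //; last exact: Qm1_neq0.
  rewrite (_ : 17 * (q%:R : C) - 1 = (17 * q - 1)%:R); last by rewrite natrB ?natrM //; lia.
  by rewrite pnatr_eq0; lia.
have r0 : r != 0.
  by apply/eqP => r0; move: hc; rewrite -hr r0 expr2 mul0r eqxx.
move: (hrr); rewrite realE => /orP [h|h].
  by right; right; right; exists r; split => //; rewrite lt_def r0.
exfalso; apply: (@no_vi C q hq r hr w1 hrr _ u1 hs).
by rewrite lt_def eq_sym r0 h.
Qed.
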